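(* Let $G=(V,E)$ be a connected graph which is either finite or infinite with bounded degrees, let $n=|V|\in\mathbb N\cup\{\infty\}$, let $o\in V$ and let $(m_t)_{t\ge0}$ be the fragmentation process originating at $o$. Let $t>0$ and suppose that $Q_t\ge 2/n$ (this holds automatically if $V$ is infinite, interpreting $2/n=0$). Then $\mathcal{E}_t\ge Q_t^3/8$.
   Context: Fragmentation process originating at $o$: $m_t:V\to[0,1]$, with $m_0(o)=1$ and $m_0(v)=0$ for $v\neq o$. Each edge carries an independent rate-one Poisson clock; when the clock of edge $\{u,v\}$ rings at time $t$, set $m_t(u)=m_t(v)=\frac{m_{t-}(u)+m_{t-}(v)}{2}$ (with $m_{t-}(u)=\lim_{s\uparrow t}m_s(u)$), other values unchanged. Define $Q_t:=\sum_{v\in V}m_t(v)^2$ and $\mathcal E_t:=\sum_{\{u,v\}\in E}(m_t(u)-m_t(v))^2$. *)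

(* Defs.v *)
From HB Require Import structures.
From mathcomp Require Import all_boot all_order all_algebra.
From mathcomp Require Import all_classical all_reals.
From mathcomp Require Import ereal esum.
Set Implicit Arguments. Unset Strict Implicit. Unset Printing Implicit Defensive.
Import Order.TTheory GRing.Theory Num.Theory.
Local Open Scope ring_scope.

Definition simple_graph (V : Type) (adj : rel V) : Prop :=
  (forall u v, adj u v = adj v u) /\ (forall u, adj u u = false).

Definition connected_graph (V : Type) (adj : rel V) : Prop :=
  forall u v : V, exists s : seq V, path adj u s /\ last u s = v.

Definition bounded_degree (V : eqType) (adj : rel V) : Prop :=
  exists D : nat, forall u : V, exists s : seq V,
    (size s <= D)%N /\ (forall v, adj u v -> v \in s).

(* hypothesis "Q >= 2/n" with n = |V| in N u {oo}, 2/oo = 0: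
   if V is finite, enumerated without repetition by s (so n = size s),
   then Q * n >= 2; vacuous when V is infinite. *)
Definition Q_ge_2_over_n (V : eqType) (R : realType) (Q : \bar R) : Prop :=
  forall s : seq V, uniq s -> (forall v, v \in s) ->
    (2%:R%:E <= Q * (size s)%:R%:E)%E.

Definition m_init (V : eqType) (R : realType) (o : V) : V -> R :=
  fun w => if w == o then 1 else 0.

Definition ring_edge (V : eqType) (R : realType) (m : V -> R) (e : V * V)
  : V -> R :=
  fun w => if (w == e.1) || (w == e.2) then (m e.1 + m e.2) / 2 else m w.

(* A realization of the clock rings during [0,t]: a finite list of
   (ring time, edge) events, with strictly increasing times in (0,t], every
   ringing pair being an edge of the graph. *)
Definition ring_record (V : eqType) (R : realType) (adj : rel V) (t : R)
  (ev : seq (R * (V * V))) : Prop :=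
  sorted (fun a b => a.1 < b.1) ev /\
  (forall a, a \in ev -> 0 < a.1 <= t /\ adj a.2.1 a.2.2).

(* m_t along such a realization: apply the averaging steps in time order *)
Definition frag_state (V : eqType) (R : realType) (o : V)
  (ev : seq (R * (V * V))) : V -> R :=
  foldl (fun m a => ring_edge m a.2) (m_init R o) ev.

Definition Qsum (V : choiceType) (R : realType) (m : V -> R) : \bar R :=
  (\esum_(v in [set: V]) ((m v) ^+ 2)%:E)%E.

(* E_t = sum over unordered edges {u,v} of (m(u)-m(v))^2, written as half the
   sum over ordered adjacent pairs *)
Definition Esum (V : choiceType) (R : realType) (adj : rel V) (m : V -> R)
  : \bar R :=
  ((\esum_(p in [set p : V * V | adj p.1 p.2]) ((m p.1 - m p.2) ^+ 2)%:E)
    * (2^-1)%:E)%E.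

(* Main.v *)
Require Import Defs.
From HB Require Import structures.
From mathcomp Require Import all_boot all_order all_algebra.
From mathcomp Require Import all_classical all_reals.
From mathcomp Require Import ereal esum.
From mathcomp Require Import ring lra.
Import Order.TTheory GRing.Theory Num.Theory.
Local Open Scope ring_scope.
Lemma sum_ind (V : eqType) (R : realType) (S : seq V) (x : V) :
  uniq S -> x \in S -> \sum_(w <- S) ((w == x)%:R : R) = 1.
Proof.
move=> uS xS; rewrite (bigD1_seq x) //= eqxx big1 ?addr0 // => w /negbTE -> //.
Qed.

Lemma ring_edgeE (V : eqType) (R : realType) (m : V -> R) (e : V * V) w :
  e.1 != e.2 ->
  ring_edge m e w = m w + (w == e.1)%:R * ((m e.2 - m e.1) / 2)
                        + (w == e.2)%:R * ((m e.1 - m e.2) / 2).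
Proof.
move=> ne; rewrite /ring_edge.
have [->|n1] := eqVneq w e.1.
  rewrite (negbTE ne) /=; lra.
have [->|n2] := eqVneq w e.2; rewrite /=; lra.
Qed.

Lemma step_inv (V : eqType) (R : realType) (S : seq V) (m : V -> R) (e : V * V) :
  uniq S -> e.1 \in S -> e.2 \in S -> e.1 != e.2 ->
  (forall v, 0 <= m v <= 1) -> (forall v, v \notin S -> m v = 0) ->
  \sum_(v <- S) m v = 1 ->
  [/\ (forall v, 0 <= ring_edge m e v <= 1),
      (forall v, v \notin S -> ring_edge m e v = 0) &
      \sum_(v <- S) ring_edge m e v = 1].
Proof.
move=> uS e1S e2S ne b sup s1; split.
- move=> v; rewrite /ring_edge; case: ifP => _ //.
  have := b e.1; have := b e.2; move=> /andP[? ?] /andP[? ?].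
  apply/andP; split; lra.
- move=> v vS; rewrite /ring_edge.
  have -> : (v == e.1) = false by apply/negbTE; apply: contraNneq vS => ->.
  have -> : (v == e.2) = false by apply/negbTE; apply: contraNneq vS => ->.
  exact: sup.
- under eq_bigr do rewrite ring_edgeE //.
  rewrite !big_split /= -!mulr_suml !sum_ind // s1; lra.
Qed.

Lemma fold_inv (V : eqType) (R : realType) (S : seq V) (ev : seq (R * (V * V)))
  (m0 : V -> R) :
  uniq S -> (forall a, a \in ev -> [/\ a.2.1 \in S, a.2.2 \in S & a.2.1 != a.2.2]) ->
  (forall v, 0 <= m0 v <= 1) -> (forall v, v \notin S -> m0 v = 0) ->
  \sum_(v <- S) m0 v = 1 ->
  [/\ (forall v, 0 <= foldl (fun m a => ring_edge m a.2) m0 ev v <= 1),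
      (forall v, v \notin S -> foldl (fun m a => ring_edge m a.2) m0 ev v = 0) &
      \sum_(v <- S) foldl (fun m a => ring_edge m a.2) m0 ev v = 1].
Proof.
move=> uS; elim: ev m0 => [|a ev IH] m0 hev b sup s1 /=; first by split.
have [h1 h2 h3] := hev a (mem_head _ _).
have [b' sup' s1'] := @step_inv V R S m0 a.2 uS h1 h2 h3 b sup s1.
apply: IH => // a' a'ev; apply: hev; rewrite in_cons a'ev orbT //.
Qed.
Fixpoint Dsum (V : Type) (R : realType) (m : V -> R) (x : V) (r : seq V) : R :=
  if r is z :: r' then (m x - m z) ^+ 2 + @Dsum V R m z r' else 0.
Arguments Dsum {V R}.

Fixpoint pairs (V : Type) (x : V) (r : seq V) : seq (V * V) :=
  if r is z :: r' then (x, z) :: (z, x) :: @pairs V z r' else [::].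
Arguments pairs {V}.

Lemma Dsum_ge0 (V : Type) (R : realType) (m : V -> R) x r : 0 <= Dsum m x r.
Proof. elim: r x => [|z r IH] x //=; apply: addr_ge0 => //; exact: sqr_ge0. Qed.

Lemma Dsum_CS (V : Type) (R : realType) (m : V -> R) x r :
  (m x - m (last x r)) ^+ 2 <= (size r)%:R * Dsum m x r.
Proof.
elim: r x => [|z r IH] x /=; first by rewrite subrr expr0n /= mul0r.
have := IH z; have := Dsum_ge0 _ _ m z r.
set D := Dsum m z r; set T := m z - m (last z r); set n : R := (size r)%:R.
have n0 : 0 <= n by rewrite /n ler0n.
rewrite -[(size r).+1]addn1 natrD -/n.
have -> : m x - m (last z r) = (m x - m z) + T by rewrite /T; ring.
set d := m x - m z => D0 H.
have [n_eq0|n_gt0] := eqVneq n 0.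
  rewrite n_eq0 mul0r in H.
  have T0 : T = 0 by apply/eqP; rewrite -sqrf_eq0 eq_le H sqr_ge0.
  rewrite T0 n_eq0; nra.
have np : 0 < n by rewrite lt_def n_gt0 n0.
have key : 0 <= n * ((n + 1) * (d ^+ 2 + D) - (d + T) ^+ 2).
  have : 0 <= (n * d - T) ^+ 2 by exact: sqr_ge0.
  nra.
rewrite -subr_ge0; move: key; rewrite pmulr_rge0 //.
Qed.

Lemma sum_pairs (V : Type) (R : realType) (m : V -> R) x r :
  \sum_(p <- pairs x r) (m p.1 - m p.2) ^+ 2 = 2 * Dsum m x r.
Proof.
elim: r x => [|z r IH] x /=; first by rewrite big_nil mulr0.
rewrite !big_cons IH /=; ring.
Qed.

Lemma pairs_mem (V : eqType) (x : V) r p :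
  p \in pairs x r -> p.1 \in x :: r /\ p.2 \in x :: r.
Proof.
elim: r x => [|z r IH] x; first by [].
rewrite [pairs _ _]/= !in_cons => /orP[/eqP->|/orP[/eqP->|/IH [h1 h2]]].
- by split; rewrite /= eqxx ?orbT.
- by split; rewrite /= eqxx ?orbT.
- by move: h1 h2; rewrite !in_cons => -> ->; rewrite !orbT.
Qed.

Lemma pairs_uniq (V : eqType) (x : V) r : uniq (x :: r) -> uniq (pairs x r).
Proof.
elim: r x => [|z r IH] x; first by [].
rewrite cons_uniq in_cons negb_or => /andP[/andP[xz xr] uzr].
move: (uzr); rewrite cons_uniq => /andP[zr ur].
have xn : x \notin z :: r by rewrite in_cons negb_or xz xr.
rewrite [pairs _ _]/= !cons_uniq IH // andbT; apply/andP; split.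
  rewrite in_cons negb_or; apply/andP; split.
    by apply/eqP => -[e1 _]; move: xz; rewrite e1 eqxx.
  by apply/negP => /pairs_mem [/= h _]; move: xn; rewrite h.
by apply/negP => /pairs_mem [_ /= h]; move: xn; rewrite h.
Qed.

Lemma pairs_adj (V : eqType) (adj : rel V) x r p :
  (forall u v, adj u v = adj v u) -> path adj x r -> p \in pairs x r -> adj p.1 p.2.
Proof.
move=> sym; elim: r x => [|z r IH] x //= /andP[axz pr].
rewrite !in_cons => /orP[/eqP->|/orP[/eqP->|/IH]] //=; first by rewrite sym.
exact.
Qed.

Lemma sum_all_ge (V : Type) (R : realType) (m : V -> R) c s :
  all (fun v => c <= m v) s -> (size s)%:R * c <= \sum_(v <- s) m v.
Proof.
elim: s => [|v s IH] /=; first by rewrite big_nil mul0r.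
move=> /andP[h hs]; rewrite big_cons -addn1 natrD mulrDl mul1r addrC.
exact: lerD (IH hs).
Qed.

Lemma sub_sum (V : eqType) (R : realType) (m : V -> R) (B S : seq V) :
  uniq B -> uniq S -> {subset B <= S} -> (forall v, 0 <= m v) ->
  \sum_(v <- B) m v <= \sum_(v <- S) m v.
Proof.
move=> uB uS sBS m0.
rewrite [X in _ <= X](bigID (fun v => v \in B)) /=.
have -> : \sum_(v <- S | v \in B) m v = \sum_(v <- B) m v.
  rewrite -big_filter; apply: perm_big; apply: uniq_perm.
  - exact: filter_uniq.
  - exact: uB.
  by move=> v; rewrite mem_filter; case vB: (v \in B) => //=; rewrite sBS.
rewrite lerDl; apply: sumr_ge0 => v _; exact: m0.
Qed.

Lemma max_exists (V : eqType) (R : realType) (m : V -> R) (S : seq V) :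
  S != [::] -> exists2 x, x \in S & forall v, v \in S -> m v <= m x.
Proof.
elim: S => [|z S IH] // _.
case: S IH => [|w S'] IH.
  exists z; first exact: mem_head.
  by move=> v; rewrite in_cons orbF => /eqP ->.
have [x xS hx] := IH isT.
have [zx|xz] := leP (m z) (m x).
  exists x; first by rewrite in_cons xS orbT.
  by move=> v; rewrite in_cons => /orP[/eqP->|/hx].
exists z; first exact: mem_head.
move=> v; rewrite in_cons => /orP[/eqP->//|/hx h]; exact: le_trans h (ltW xz).
Qed.

Lemma segment (V : eqType) (R : realType) (adj : rel V) (m : V -> R) (c : R) q x :
  path adj x q -> uniq (x :: q) -> m (last x q) < c -> c <= m x ->
  exists r, [/\ path adj x r, uniq (x :: r), {subset r <= q}, m (last x r) < c
              & all (fun v => c <= m v) (belast x r)].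
Proof.
elim: q x => [|z q IH] x.
  move=> _ _ /= h1 h2; exfalso; move: (lt_le_trans h1 h2); by rewrite ltxx.
move=> pxq u hl hx; move: pxq => /= /andP[axz pq]; rewrite [last _ _]/= in hl.
move: (u); rewrite cons_uniq in_cons negb_or => /andP[/andP[xz xq] uzq].
have [hz|hz] := ltP (m z) c.
  exists [:: z]; split => //=.
  - by rewrite axz.
  - by rewrite in_cons negb_or xz.
  - by move=> v; rewrite in_cons orbF => /eqP ->; rewrite mem_head.
  - by rewrite hx.
have [r [pr ur sr lr ar]] := IH z pq uzq hl hz.
exists (z :: r); split => //=.
- by rewrite axz pr.
- rewrite in_cons negb_or xz /=; apply/andP; split => //.
  by apply/negP => /sr; rewrite (negbTE xq).
- by move=> v; rewrite !in_cons => /orP[->//|/sr ->]; rewrite orbT.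
- by rewrite hx ar.
Qed.

Lemma sum_const_seq (V : Type) (R : realType) (S : seq V) (c : R) :
  \sum_(v <- S) c = (size S)%:R * c.
Proof.
elim: S => [|v S IH]; first by rewrite big_nil mul0r.
by rewrite big_cons IH /= -addn1 natrD mulrDl mul1r addrC.
Qed.

Local Open Scope classical_set_scope.

Theorem lemma2p1 (R : realType) (V : choiceType) (adj : rel V) (o : V)
  (t : R) (ev : seq (R * (V * V))) :
  simple_graph adj -> connected_graph adj -> bounded_degree adj ->
  0 < t -> ring_record adj t ev ->
  Q_ge_2_over_n V (Qsum (frag_state o ev)) ->
  (Esum adj (frag_state o ev) >= (Qsum (frag_state o ev)) ^+ 3 * (8^-1)%:E)%E.
Proof.
move=> [sym irr] conn _ _ [_ hev] hQ.
set S := undup (o :: [seq a.2.1 | a <- ev] ++ [seq a.2.2 | a <- ev]).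
have uS : uniq S := undup_uniq _.
have oS : o \in S by rewrite mem_undup mem_head.
have evS : forall a, a \in ev -> [/\ a.2.1 \in S, a.2.2 \in S & a.2.1 != a.2.2].
  move=> a aev; have [_ ad] := hev a aev; split.
  - by rewrite mem_undup in_cons mem_cat (map_f (fun a => a.2.1) aev) orbT.
  - by rewrite mem_undup in_cons mem_cat (map_f (fun a => a.2.2) aev) !orbT.
  - by apply/eqP => e; move: ad; rewrite e irr.
have [mb msup ms1] := @fold_inv V R S ev (m_init R o) uS evS
   (fun v => ltac:(rewrite /m_init; case: ifP => _; rewrite ?lexx ?ler01 //))
   (fun v vS => ltac:(rewrite /m_init ifF //; apply: negbTE;
                      apply: contraNneq vS => ->; exact: oS))
   (ltac:(rewrite -(@sum_ind V R S o uS oS); apply: eq_bigr => v _;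
          rewrite /m_init; by case: ifP)).
rewrite -/(frag_state o ev) in mb msup ms1.
set m := frag_state o ev in hQ mb msup ms1 *.
set q := \sum_(v <- S) m v ^+ 2.
have QE : Qsum m = q%:E.
  rewrite /Qsum.
  rewrite (_ : (\esum_(v in [set: V]) ((m v)^+2)%:E)%E
             = (\esum_(v in [set` S]) ((m v)^+2)%:E)%E).
    rewrite esum_fset; last 2 first.
    - exact: finite_seq.
    - by move=> v _; rewrite lee_fin sqr_ge0.
    by rewrite -fsbig_seq // sumEFin.
  rewrite [RHS]esum_mkcond; apply: eq_esum => v _.
  rewrite mem_setE; case vS: (v \in S) => //.
  by rewrite msup ?vS // expr0n.
have m0 : forall v, 0 <= m v by move=> v; have /andP[] := mb v.
have m1 : forall v, m v <= 1 by move=> v; have /andP[] := mb v.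
have SnN : S != [::] by apply/eqP => e; move: oS; rewrite e.
have [x xS hx] := @max_exists V R m S SnN.
have qle : q <= m x.
  rewrite /q -[m x]mul1r -ms1 mulr_suml big_seq [X in _ <= X]big_seq.
  apply: ler_sum => v vS; rewrite expr2; apply: ler_wpM2l => //; exact: hx.
have mxp : 0 < m x.
  rewrite ltNge; apply/negP => h.
  have : \sum_(v <- S) m v <= \sum_(v <- S) 0.
    rewrite big_seq [X in _ <= X]big_seq; apply: ler_sum => v vS.
    exact: le_trans (hx v vS) h.
  by rewrite ms1 big1 // ler10.
have qp : 0 < q.
  rewrite /q (bigD1_seq x) //=; apply: (@lt_le_trans _ _ (m x ^+ 2)).
    by rewrite exprn_gt0.
  by rewrite lerDl; apply: sumr_ge0 => v _; exact: sqr_ge0.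
have hq2 : 0 < q / 2 by rewrite divr_gt0.
have [y hy] : exists y, m y < q / 2.
  case: (pselect (exists y, m y < q / 2)) => // nex; exfalso.
  have allge : forall v, q / 2 <= m v.
    by move=> v; rewrite leNgt; apply/negP => h; apply: nex; exists v.
  have allS : forall v, v \in S.
    move=> v; apply/negPn/negP => vS; have := allge v; rewrite msup //.
    by move=> h; move: hq2; rewrite ltNge h.
  have := hQ S uS allS; rewrite -/m QE -EFinM lee_fin => h2.
  have h3 : \sum_(v <- S) (m v - q / 2) * m v <= \sum_(v <- S) (m v - q / 2).
    apply: ler_sum => v _; rewrite -[X in _ <= X]mulr1; apply: ler_wpM2l => //.
    by rewrite subr_ge0.
  move: h3; rewrite sumrB sum_const_seq ms1.
  under eq_bigr do rewrite mulrBl.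
  rewrite sumrB -mulr_sumr ms1 mulr1.
  have -> : \sum_(i <- S) m i * m i = q by apply: eq_bigr => v _; rewrite expr2.
  move=> h; set n : R := (size S)%:R in h2 h; nra.
have [s [ps ls]] : exists s, path adj x s /\ last x s = y := conn x y.
move: ls; case: (shortenP ps) => s' ps' us' _ ls'.
have [r [pr ur _ lr ar]] := @segment V R adj m (q / 2) s' x ps' us'
   (ltac:(by rewrite ls')) (ltac:(apply: le_trans qle; rewrite ler_pdivrMr //; nra)).
set B := belast x r.
have uB : uniq B.
  by move: ur; rewrite lastI rcons_uniq => /andP[].
have sB : {subset B <= S}.
  move=> v vB; have := allP ar v vB => h.
  apply/negPn/negP => vS; move: h; rewrite msup //.
  by move=> h; move: hq2; rewrite ltNge h.
have hsize : (size r)%:R * (q / 2) <= 1.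
  rewrite -(size_belast x) -/B; apply: le_trans (@sum_all_ge V R m _ _ ar) _; rewrite -ms1.
  exact: (@sub_sum V R m B S uB uS sB m0).
have hCS := @Dsum_CS V R m x r.
set D := Dsum m x r in hCS.
set T := m x - m (last x r) in hCS.
have hT : q / 2 <= T by rewrite /T; lra.
have D0 : 0 <= D := Dsum_ge0 _ _ m x r.
have final : q ^+ 3 / 8 <= D.
  set n : R := (size r)%:R in hsize hCS.
  have n0 : 0 <= n by rewrite /n ler0n.
  have T2 : q ^+ 2 / 4 <= T ^+ 2.
    have : 0 <= q / 2 by lra.
    move=> h0; have := ler_pM h0 h0 hT hT; rewrite -!expr2 => h'.
    apply: le_trans h'; rewrite expr_div_n; lra.
  have e1 : q * (q ^+ 2 / 4) <= q * (n * D) by apply: ler_wpM2l; lra.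
  have e2 : q * (n * D) <= 2 * D by nra.
  have -> : q ^+ 3 / 8 = (q * (q ^+ 2 / 4)) / 2 by rewrite exprS; field.
  lra.
have Elow : ((2 * D)%:E <= \esum_(p in [set p : V * V | adj p.1 p.2])
                             ((m p.1 - m p.2) ^+ 2)%:E)%E.
  apply: esum_ge; exists [set` pairs x r].
    split; first exact: finite_seq.
    move=> p /= pP; exact: (@pairs_adj V adj x r p sym pr pP).
  rewrite -fsbig_seq; last exact: pairs_uniq.
  by rewrite sumEFin sum_pairs.
rewrite QE /Esum -EFin_expe -EFinM.
apply: le_trans (lee_wpmul2r _ Elow); first by rewrite -EFinM lee_fin; lra.
by rewrite lee_fin invr_ge0.
Qed.
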